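(* Let $\gamma>0$, $a,b,c,d>0$ and $\rho>1/2$. Let $(x_n)$ and $(y_n)$ be sequences of positive real numbers satisfying, for all $n$, $$x_{n+1}-x_n\le-\gamma a\,x_n^{1+\rho}y_n^{-\rho}+\gamma b\,x_n,\qquad y_{n+1}-y_n\le-\gamma c\,x_n^\rho y_n^{1-\rho}+\gamma d\sqrt{x_ny_n}.$$ Assume further that $$x_k\ge\Big(\frac dc\Big)^{\frac{2}{2\rho-1}}y_0\quad\text{and}\quad x_k\ge\Big(2\frac ba\Big)^{\frac1\rho}y_0\qquad\text{for all }k=0,\dots,n-1.$$ Then $x_n\le e^{-\gamma bn}x_0$ and $y_n\le y_0$. *)

(* Defs.v *)
From Stdlib Require Export Reals.
Open Scope R_scope.

(* Main.v *)
Require Import Defs.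
From Stdlib Require Import Reals Lra Lia.
Open Scope R_scope.

Lemma my_exp_le x y : x <= y -> exp x <= exp y.
Proof. intros [H|H]; [left; now apply exp_increasing | subst; lra]. Qed.

Lemma my_ln_le x y : 0 < x -> x <= y -> ln x <= ln y.
Proof. intros Hx [H|H]; [left; now apply ln_increasing | subst; lra]. Qed.

Lemma lemA a b rho x y : 0 < a -> 0 < b -> 0 < rho -> 0 < x -> 0 < y ->
  Rpower (2 * (b / a)) (1 / rho) * y <= x ->
  2 * b * x <= a * Rpower x (1 + rho) * Rpower y (- rho).
Proof.
  intros ha hb hr hx hy H.
  assert (hK : 0 < 2 * (b / a)) by (apply Rmult_lt_0_compat; [lra| apply Rdiv_lt_0_compat; lra]).
  unfold Rpower in *.
  set (L := ln (2 * (b / a))) in *.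
  assert (H1 : ln (exp (1 / rho * L) * y) <= ln x).
  { apply my_ln_le; [apply Rmult_lt_0_compat; [apply exp_pos|lra] | exact H]. }
  rewrite ln_mult, ln_exp in H1 by (try apply exp_pos; lra).
  assert (H2 : L <= rho * (ln x - ln y)).
  { assert (rho * (1 / rho * L) = L) by (field; lra). nra. }
  replace ((1 + rho) * ln x) with (ln x + rho * (ln x - ln y) + rho * ln y) by ring.
  rewrite !exp_plus, exp_ln by lra.
  assert (E : exp (rho * ln y) * exp (- rho * ln y) = 1).
  { rewrite <- exp_plus. replace (rho * ln y + - rho * ln y) with 0 by ring. apply exp_0. }
  assert (E2 : 2 * (b / a) <= exp (rho * (ln x - ln y))).
  { unfold L in H2. rewrite <- (exp_ln (2 * (b / a))) by lra. now apply my_exp_le. }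
  replace (a * (x * exp (rho * (ln x - ln y)) * exp (rho * ln y)) * exp (- rho * ln y))
    with (a * x * exp (rho * (ln x - ln y)) * (exp (rho * ln y) * exp (- rho * ln y))) by ring.
  rewrite E.
  assert (a * x * (2 * (b / a)) = 2 * b * x) by (field; lra).
  assert (0 < a * x) by nra. nra.
Qed.

Lemma lemB c d rho x y : 0 < c -> 0 < d -> 1/2 < rho -> 0 < x -> 0 < y ->
  Rpower (d / c) (2 / (2 * rho - 1)) * y <= x ->
  d * sqrt (x * y) <= c * Rpower x rho * Rpower y (1 - rho).
Proof.
  intros hc hd hr hx hy H.
  assert (hK : 0 < d / c) by (apply Rdiv_lt_0_compat; lra).
  rewrite <- Rpower_sqrt by nra.
  unfold Rpower in *.
  set (L := ln (d / c)) in *.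
  assert (H1 : ln (exp (2 / (2 * rho - 1) * L) * y) <= ln x).
  { apply my_ln_le; [apply Rmult_lt_0_compat; [apply exp_pos|lra] | exact H]. }
  rewrite ln_mult, ln_exp in H1 by (try apply exp_pos; lra).
  assert (H2 : L <= (rho - /2) * (ln x - ln y)).
  { assert ((rho - /2) * (2 / (2 * rho - 1) * L) = L) by (field; lra). nra. }
  rewrite ln_mult by lra.
  rewrite (Rmult_assoc c), <- exp_plus.
  replace (rho * ln x + (1 - rho) * ln y) with (/2 * (ln x + ln y) + (rho - /2) * (ln x - ln y)) by field.
  rewrite exp_plus.
  assert (E2 : d / c <= exp ((rho - /2) * (ln x - ln y))).
  { unfold L in H2. rewrite <- (exp_ln (d / c)) by lra. now apply my_exp_le. }
  assert (c * (d / c) = d) by (field; lra).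
  pose proof (exp_pos (/ 2 * (ln x + ln y))) as Pe.
  set (e := exp (/ 2 * (ln x + ln y))) in *.
  set (f := exp ((rho - /2) * (ln x - ln y))) in *.
  assert (e * (d / c) <= e * f) by (apply Rmult_le_compat_l; lra).
  assert (c * (e * (d / c)) <= c * (e * f)) by (apply Rmult_le_compat_l; lra).
  replace (c * (e * (d / c))) with (d * e) in * by (field; lra).
  lra.
Qed.

Theorem lemma3p3 (gamma a b c d rho : R) (x y : nat -> R) (n : nat)
  (hgamma : 0 < gamma) (ha : 0 < a) (hb : 0 < b) (hc : 0 < c) (hd : 0 < d)
  (hrho : 1/2 < rho)
  (hx : forall m, 0 < x m) (hy : forall m, 0 < y m)
  (hrecx : forall m, x (S m) - x m <=
      - gamma * a * Rpower (x m) (1 + rho) * Rpower (y m) (- rho)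
      + gamma * b * x m)
  (hrecy : forall m, y (S m) - y m <=
      - gamma * c * Rpower (x m) rho * Rpower (y m) (1 - rho)
      + gamma * d * sqrt (x m * y m))
  (hk1 : forall k, (k < n)%nat -> Rpower (d / c) (2 / (2 * rho - 1)) * y 0%nat <= x k)
  (hk2 : forall k, (k < n)%nat -> Rpower (2 * (b / a)) (1 / rho) * y 0%nat <= x k) :
  x n <= exp (- (gamma * b * INR n)) * x 0%nat /\ y n <= y 0%nat.
Proof.
  assert (G : forall k, (k <= n)%nat ->
    x k <= exp (- (gamma * b * INR k)) * x 0%nat /\ y k <= y 0%nat).
  { induction k as [|k IH]; intros Hk.
    - simpl. rewrite Rmult_0_r, Ropp_0, exp_0. lra.
    - destruct (IH ltac:(lia)) as [IHx IHy].
      assert (Hkn : (k < n)%nat) by lia.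
      assert (Hy0 : 0 <= y 0%nat) by (left; apply hy).
      assert (A1 : Rpower (2 * (b / a)) (1 / rho) * y k <= x k).
      { eapply Rle_trans; [|apply hk2; exact Hkn].
        apply Rmult_le_compat_l; [left; apply exp_pos | exact IHy]. }
      assert (B1 : Rpower (d / c) (2 / (2 * rho - 1)) * y k <= x k).
      { eapply Rle_trans; [|apply hk1; exact Hkn].
        apply Rmult_le_compat_l; [left; apply exp_pos | exact IHy]. }
      pose proof (lemA a b rho (x k) (y k) ha hb ltac:(lra) (hx k) (hy k) A1) as HA.
      pose proof (lemB c d rho (x k) (y k) hc hd hrho (hx k) (hy k) B1) as HB.
      pose proof (hrecx k) as Rx. pose proof (hrecy k) as Ry.
      split.
      + assert (X1 : x (S k) <= (1 - gamma * b) * x k).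
        { assert (gamma * (2 * b * x k) <= gamma * (a * Rpower (x k) (1 + rho) * Rpower (y k) (- rho)))
            by (apply Rmult_le_compat_l; lra).
          nra. }
        assert (X2 : 1 - gamma * b <= exp (- (gamma * b))).
        { pose proof (exp_ineq1_le (- (gamma * b))). lra. }
        rewrite S_INR.
        replace (- (gamma * b * (INR k + 1))) with (- (gamma * b * INR k) + - (gamma * b)) by ring.
        rewrite exp_plus.
        pose proof (hx k). pose proof (hx (S k)).
        assert ((1 - gamma * b) * x k <= exp (- (gamma * b)) * x k) by (apply Rmult_le_compat_r; lra).
        assert (exp (- (gamma * b)) * x k <= exp (- (gamma * b)) * (exp (- (gamma * b * INR k)) * x 0%nat))
          by (apply Rmult_le_compat_l; [left; apply exp_pos | exact IHx]).
        lra.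
      + assert (gamma * (d * sqrt (x k * y k)) <= gamma * (c * Rpower (x k) rho * Rpower (y k) (1 - rho)))
          by (apply Rmult_le_compat_l; lra).
        nra. }
  apply G; lia.
Qed.
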